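(* Let $P$ be a subgroup of $I_K(\mathfrak{n})$ with $P_{K,1}(\mathfrak{n})\subseteq P\subseteq P_K(\mathfrak{n})$ and let $\Gamma$ be a subgroup of $\mathrm{SL}_2(\mathbb{Z})$. The map $\phi_\Gamma:\mathcal{Q}_N(d_K)/\sim_\Gamma\to I_K(\mathfrak{n})/P$, $[Q]\mapsto[[\omega_Q,1]]$, is well defined and injective if and only if $\Gamma$ satisfies property (P): for every $Q\in\mathcal{Q}_N(d_K)$ and every $\gamma\in\mathrm{SL}_2(\mathbb{Z})$ with $Q^{\gamma^{-1}}\in\mathcal{Q}_N(d_K)$, one has $j(\gamma,\omega_Q)\mathcal{O}_K\in P$ if and only if $\gamma\in\Gamma\cdot I_{\omega_Q}$.
   Context: Let $K$ be an imaginary quadratic field with discriminant $d_K$ and ring of integers $\mathcal{O}_K$. Let $N$ be a positive integer and $\mathfrak{n}=N\mathcal{O}_K$. $I_K(\mathfrak{n})$ denotes the group of fractional ideals of $K$ relatively prime to $\mathfrak{n}$, $P_K(\mathfrak{n})$ its subgroup of principal fractional ideals, and $P_{K,1}(\mathfrak{n})=\{\nu\mathcal{O}_K:\nu\in K^*,\ \nu\equiv^*1\pmod{\mathfrak{n}}\}$, where $\equiv^*$ is multiplicative congruence. $\mathcal{Q}(d_K)$ is the set of primitive positive definite binary quadratic forms $ax^2+bxy+cy^2\in\mathbb{Z}[x,y]$ with $b^2-4ac=d_K$, and $\mathcal{Q}_N(d_K)=\{ax^2+bxy+cy^2\in\mathcal{Q}(d_K):\gcd(N,a)=1\}$. For $Q=ax^2+bxy+cy^2\in\mathcal{Q}(d_K)$,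 $\omega_Q=(-b+\sqrt{d_K})/(2a)\in\mathbb{H}$ and $[\omega_Q,1]=\mathbb{Z}\omega_Q+\mathbb{Z}$ (a fractional ideal of $K$). For $\gamma\in\mathrm{SL}_2(\mathbb{Z})$, $Q^\gamma(x,y)=Q(\gamma\,(x,y)^T)$. For a subgroup $\Gamma\subseteq\mathrm{SL}_2(\mathbb{Z})$, the relation $\sim_\Gamma$ on $\mathcal{Q}_N(d_K)$ is: $Q\sim_\Gamma Q'$ iff $Q'=Q^\gamma$ for some $\gamma\in\Gamma$. For $\gamma=\begin{bmatrix}a&b\\c&d\end{bmatrix}\in\mathrm{SL}_2(\mathbb{Z})$ and $\tau\in\mathbb{H}$, $j(\gamma,\tau)=c\tau+d$. $I_{\omega}$ denotes the isotropy subgroup of $\omega\in\mathbb{H}$ in $\mathrm{SL}_2(\mathbb{Z})$ under the action by fractional linear transformations. *)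

(* Defs.v *)
(* K = Q(sqrt d) is realised inside algC. *)
From HB Require Import structures.
From mathcomp Require Import all_boot all_order all_algebra all_field.
Set Implicit Arguments. Unset Strict Implicit. Unset Printing Implicit Defensive.
Import Order.TTheory GRing.Theory Num.Theory.
Local Open Scope ring_scope.

Definition sqfree_int (m : int) : Prop :=
  forall p : nat, prime p -> ~~ ((p ^ 2)%N%:Z %| m)%Z.

Definition fund_disc (d : int) : Prop :=
  (d != 1 /\ (d %% 4)%Z = 1 /\ sqfree_int d) \/
  (exists m : int, d = 4 * m /\ ((m %% 4)%Z = 2 \/ (m %% 4)%Z = 3) /\ sqfree_int m).

Definition Kelt (d : int) (x : algC) : Prop :=
  exists r s : rat, x = ratr r + ratr s * sqrtC (d%:~R).

Definition OK (d : int) (x : algC) : Prop := Kelt d x /\ x \in Aint.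

Definition cset := algC -> Prop.
Definition eqI (I J : cset) : Prop := forall x, I x <-> J x.

Definition frac_ideal (d : int) (I : cset) : Prop :=
  (forall x, I x -> Kelt d x) /\
  I 0 /\
  (forall x y, I x -> I y -> I (x - y)) /\
  (forall r x, OK d r -> I x -> I (r * x)) /\
  (exists x, I x /\ x != 0) /\
  (exists c, [/\ c != 0, OK d c & forall x, I x -> OK d (c * x)]).

Definition prodI (I J : cset) : cset := fun x =>
  exists s : seq (algC * algC),
    (forall p, p \in s -> I p.1 /\ J p.2) /\ x = \sum_(p <- s) p.1 * p.2.

Definition sumI (I J : cset) : cset := fun x =>
  exists y z, [/\ I y, J z & x = y + z].

Definition principal (d : int) (nu : algC) : cset := fun x =>
  exists r, OK d r /\ x = nu * r.

(** the modulus n = N O_K *)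
Definition nId (d : int) (N : nat) : cset := principal d (N%:R).

Definition coprime_integral (d : int) (N : nat) (A : cset) : Prop :=
  [/\ frac_ideal d A, (forall x, A x -> OK d x) & eqI (sumI A (nId d N)) (OK d)].

(** I_K(n): fractional ideals relatively prime to n, i.e. I = A B^{-1}
    with A, B integral ideals relatively prime to n *)
Definition I_K (d : int) (N : nat) (I : cset) : Prop :=
  frac_ideal d I /\
  exists A B, [/\ coprime_integral d N A, coprime_integral d N B & eqI (prodI I B) A].

Definition P_K (d : int) (N : nat) (I : cset) : Prop :=
  I_K d N I /\ exists nu, [/\ nu != 0, Kelt d nu & eqI I (principal d nu)].

Definition mult_cong1 (d : int) (N : nat) (nu : algC) : Prop :=
  exists al be, [/\ OK d al, OK d be & be != 0] /\
    [/\ coprime_integral d N (principal d al), coprime_integral d N (principal d be),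
    nu = al / be & OK d ((al - be) / N%:R)].

Definition P_K1 (d : int) (N : nat) (I : cset) : Prop :=
  exists nu, [/\ nu != 0, Kelt d nu, mult_cong1 d N nu & eqI I (principal d nu)].

Definition ideal_subgroup (d : int) (N : nat) (P : cset -> Prop) : Prop :=
  [/\ (forall I J, eqI I J -> P I -> P J),
      (forall I, P I -> I_K d N I),
      P (OK d),
      (forall I J, P I -> P J -> P (prodI I J)) &
      (forall I, P I -> exists J, P J /\ eqI (prodI I J) (OK d))].

Definition same_class (P : cset -> Prop) (I J : cset) : Prop :=
  exists C, P C /\ eqI I (prodI J C).

(** binary quadratic forms a x^2 + b x y + c y^2 as triples ((a, b), c) *)
Definition bqf := (int * int * int)%type.
Definition qa (Q : bqf) := Q.1.1.
Definition qb (Q : bqf) := Q.1.2.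
Definition qc (Q : bqf) := Q.2.

(** Q(d): primitive positive definite forms of discriminant d (d < 0 assumed) *)
Definition QF (d : int) (Q : bqf) : Prop :=
  [/\ 0 < qa Q, gcdz (gcdz (qa Q) (qb Q)) (qc Q) = 1 & qb Q ^+ 2 - 4 * qa Q * qc Q = d].

Definition QN (d : int) (N : nat) (Q : bqf) : Prop := QF d Q /\ coprimez (qa Q) N%:Z.

Definition SL2 (g : 'M[int]_2) : Prop := \det g = 1.
Definition m00 (g : 'M[int]_2) := g ord0 ord0.
Definition m01 (g : 'M[int]_2) := g ord0 ord_max.
Definition m10 (g : 'M[int]_2) := g ord_max ord0.
Definition m11 (g : 'M[int]_2) := g ord_max ord_max.

(** Q^g (x, y) = Q (g (x, y)^T) *)
Definition form_act (Q : bqf) (g : 'M[int]_2) : bqf :=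
  let a := qa Q in let b := qb Q in let c := qc Q in
  let p := m00 g in let q := m01 g in let r := m10 g in let s := m11 g in
  ((a * p ^+ 2 + b * p * r + c * r ^+ 2,
    2 * a * p * q + b * (p * s + q * r) + 2 * c * r * s),
    a * q ^+ 2 + b * q * s + c * s ^+ 2).

Definition mob (g : 'M[int]_2) (t : algC) : algC :=
  ((m00 g)%:~R * t + (m01 g)%:~R) / ((m10 g)%:~R * t + (m11 g)%:~R).
Definition jfac (g : 'M[int]_2) (t : algC) : algC := (m10 g)%:~R * t + (m11 g)%:~R.

Definition omega (d : int) (Q : bqf) : algC :=
  (- (qb Q)%:~R + sqrtC (d%:~R)) / (2 * (qa Q)%:~R).
Definition lat (w : algC) : cset := fun x =>
  exists m n : int, x = m%:~R * w + n%:~R.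

Definition SL2_subgroup (G : 'M[int]_2 -> Prop) : Prop :=
  [/\ (forall g, G g -> SL2 g), G 1%:M,
      (forall g h, G g -> G h -> G (g *m h)) & (forall g, G g -> G (invmx g))].

Definition simG (G : 'M[int]_2 -> Prop) (Q Q' : bqf) : Prop :=
  exists g, G g /\ Q' = form_act Q g.

Definition phi_wd_inj (d : int) (N : nat) (P : cset -> Prop) (G : 'M[int]_2 -> Prop) : Prop :=
  [/\ (forall Q, QN d N Q -> I_K d N (lat (omega d Q))),
      (forall Q Q', QN d N Q -> QN d N Q' -> simG G Q Q' ->
         same_class P (lat (omega d Q)) (lat (omega d Q'))) &
      (forall Q Q', QN d N Q -> QN d N Q' ->
         same_class P (lat (omega d Q)) (lat (omega d Q')) -> simG G Q Q')].

Definition propertyP (d : int) (N : nat) (P : cset -> Prop) (G : 'M[int]_2 -> Prop) : Prop :=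
  forall Q g, QN d N Q -> SL2 g -> QN d N (form_act Q (invmx g)) ->
    (P (principal d (jfac g (omega d Q))) <->
     exists g1 h, [/\ G g1, SL2 h, mob h (omega d Q) = omega d Q & g = g1 *m h]).

(* Main.v *)
Require Import Defs.
From HB Require Import structures.
From mathcomp Require Import all_boot all_order all_algebra all_field.
From mathcomp Require Import zify ring lra.
Import Order.TTheory GRing.Theory Num.Theory.
Set Implicit Arguments. Unset Strict Implicit. Unset Printing Implicit Defensive.
Local Open Scope ring_scope.

Lemma lift00 : lift ord0 (ord0 : 'I_1) = ord_max :> 'I_2.
Proof. exact: val_inj. Qed.

Lemma mul22E (g h : 'M[int]_2) :
  [/\ m00 (g *m h) = m00 g * m00 h + m01 g * m10 h,
      m01 (g *m h) = m00 g * m01 h + m01 g * m11 h,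
      m10 (g *m h) = m10 g * m00 h + m11 g * m10 h &
      m11 (g *m h) = m10 g * m01 h + m11 g * m11 h].
Proof.
by rewrite /m00 /m01 /m10 /m11 !mxE !big_ord_recl !big_ord0 !addr0 lift00.
Qed.

Lemma det22 (g : 'M[int]_2) : \det g = m00 g * m11 g - m01 g * m10 g.
Proof.
rewrite (expand_det_row _ ord0) !big_ord_recl big_ord0 addr0 lift00.
rewrite /cofactor !det_mx11 /m00 /m01 /m10 /m11 !mxE /=.
rewrite !lift00.
idtac.
rewrite addn0 add0n expr0 expr1 mul1r mulN1r mulrN.
by congr (_ - _ * g _ _); apply: val_inj.
Qed.

Lemma one22 : [/\ m00 (1%:M : 'M[int]_2) = 1, m01 (1%:M : 'M[int]_2) = 0,
   m10 (1%:M : 'M[int]_2) = 0 & m11 (1%:M : 'M[int]_2) = 1].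
Proof. by rewrite /m00 /m01 /m10 /m11 !mxE. Qed.
Lemma sq_props (d : int) : d < 0 ->
  [/\ sqrtC (d%:~R : algC) ^+ 2 = d%:~R, (sqrtC (d%:~R : algC))^* = - sqrtC (d%:~R),
      'Re (sqrtC (d%:~R : algC)) = 0 & 0 < 'Im (sqrtC (d%:~R : algC))].
Proof.
move=> dlt0.
set s := sqrtC _.
have s2 : s ^+ 2 = d%:~R by rewrite sqrtCK.
have c2 : (s^*) ^+ 2 = s ^+ 2 by rewrite -rmorphXn s2 rmorph_int.
have sc : s^* = - s.
  have : (s^* - s) * (s^* + s) = 0 by rewrite -subr_sqr c2 subrr.
  move/eqP; rewrite mulf_eq0 => /orP[|]; last by rewrite addr_eq0 => /eqP.
  rewrite subr_eq0 => /eqP/CrealP sreal.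
  have : 0 <= s ^+ 2 by rewrite real_exprn_even_ge0.
  by rewrite s2 ler0z lt_geF.
have re0 : 'Re s = 0 by rewrite ReE sc subrr mul0r.
split => //.
have ge0 : 0 <= 'Im s by apply: Im_rootC_ge0.
rewrite lt_def ge0 andbT; apply/eqP => im0.
have : s = 0 by rewrite [s]Crect re0 im0 mulr0 addr0.
move=> s0; move: s2; rewrite s0 expr0n /= => /eqP; rewrite eq_sym intr_eq0 => /eqP d0.
by move: dlt0; rewrite d0 ltxx.
Qed.

Lemma Re_int (k : int) : 'Re (k%:~R : algC) = k%:~R.
Proof. by apply/Creal_ReP; rewrite realz. Qed.
Lemma Im_int (k : int) : 'Im (k%:~R : algC) = 0.
Proof. by apply/Creal_ImP; rewrite realz. Qed.

Lemma Re_lin (p q : int) (t : algC) : 'Re (p%:~R * t + q%:~R) = p%:~R * 'Re t + q%:~R.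
Proof. by rewrite raddfD /= ReMl ?realz // Re_int. Qed.
Lemma Im_lin (p q : int) (t : algC) : 'Im (p%:~R * t + q%:~R) = p%:~R * 'Im t.
Proof. by rewrite raddfD /= ImMl ?realz // Im_int addr0. Qed.

Lemma SL2_mul g h : SL2 g -> SL2 h -> SL2 (g *m h).
Proof. by rewrite /SL2 det_mulmx => -> ->; rewrite mulr1. Qed.

Lemma SL2_unit g : SL2 g -> g \in unitmx.
Proof. by rewrite /SL2 unitmxE => ->; rewrite unitr1. Qed.

Lemma SL2_inv g : SL2 g ->
  [/\ SL2 (invmx g), invmx g *m g = 1%:M & g *m invmx g = 1%:M].
Proof.
move=> sg; have u := SL2_unit sg; split; last first.
- exact: mulmxV.
- exact: mulVmx.
by rewrite /SL2 det_inv sg invr1.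
Qed.

Lemma SL2_1 : SL2 (1%:M : 'M[int]_2).
Proof. by rewrite /SL2 det1. Qed.

Lemma jfac_neq0 g t : SL2 g -> 0 < 'Im t -> jfac g t != 0.
Proof.
rewrite /SL2 det22 /jfac => sg imt.
have [r0|rn0] := eqVneq (m10 g) 0.
  rewrite r0 mul0r add0r intr_eq0; apply/eqP => s0.
  by move: sg; rewrite r0 s0 !mulr0 subrr.
apply/eqP => j0.
have : 'Im ((m10 g)%:~R * t + (m11 g)%:~R) = 0 by rewrite j0 raddf0.
rewrite Im_lin => /eqP; rewrite mulf_eq0 intr_eq0 (negbTE rn0) /=.
by rewrite gt_eqF.
Qed.

Lemma Im_mob g t : 'Im (mob g t) = (\det g)%:~R * 'Im t / `|jfac g t| ^+ 2.
Proof.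
rewrite /mob Im_div -/(jfac g t) /jfac !Re_lin !Im_lin det22.
congr (_ / _); rewrite intrB !intrM; ring.
Qed.

Lemma mob_H g t : SL2 g -> 0 < 'Im t -> 0 < 'Im (mob g t).
Proof.
move=> sg it; rewrite Im_mob sg mul1r divr_gt0 // exprn_gt0 // normr_gt0.
exact: jfac_neq0.
Qed.

Lemma mob1 t : mob 1%:M t = t.
Proof.
rewrite /mob; case: one22 => -> -> -> ->.
by rewrite mul1r mul0r addr0 add0r divr1.
Qed.

Lemma jfac_mul g h t : jfac h t != 0 ->
  jfac (g *m h) t = jfac g (mob h t) * jfac h t.
Proof.
move=> jn; rewrite /mob -/(jfac h t).
rewrite {1}/jfac; case: (mul22E g h) => _ _ -> ->.
rewrite /jfac mulrDl -mulrA divfK // !intrD !intrM; ring.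
Qed.

Lemma mob_mul g h t : jfac h t != 0 ->
  mob (g *m h) t = mob g (mob h t).
Proof.
move=> jn.
have num : (m00 (g *m h))%:~R * t + (m01 (g *m h))%:~R =
   ((m00 g)%:~R * mob h t + (m01 g)%:~R) * jfac h t :> algC.
  rewrite /mob -/(jfac h t); case: (mul22E g h) => -> -> _ _.
  rewrite mulrDl -mulrA divfK // !intrD !intrM /jfac; ring.
rewrite [LHS]/mob num -/(jfac (g *m h) t) jfac_mul // /mob -/(jfac g (mob h t)).
by rewrite invfM mulrACA divff // mulr1.
Qed.

Definition Qe (Q : bqf) (x y : algC) : algC :=
  (qa Q)%:~R * x ^+ 2 + (qb Q)%:~R * x * y + (qc Q)%:~R * y ^+ 2.
Definition disc (Q : bqf) : int := qb Q ^+ 2 - 4 * qa Q * qc Q.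

Lemma Qe_act Q h x y : Qe (form_act Q h) x y =
  Qe Q ((m00 h)%:~R * x + (m01 h)%:~R * y) ((m10 h)%:~R * x + (m11 h)%:~R * y).
Proof.
rewrite /Qe /form_act /qa /qb /qc /=.
ring.
Qed.

Lemma Qe_hom Q l x y : Qe Q (l * x) (l * y) = l ^+ 2 * Qe Q x y.
Proof. rewrite /Qe; ring. Qed.

Lemma disc_act Q h : disc (form_act Q h) = (\det h) ^+ 2 * disc Q.
Proof. rewrite /disc /form_act /qa /qb /qc /= det22; ring. Qed.

Lemma posdef (a b c x y : int) : 0 < a -> b ^+ 2 - 4 * a * c < 0 ->
  (x != 0) || (y != 0) -> 0 < a * x ^+ 2 + b * x * y + c * y ^+ 2.
Proof.
move=> a0 dn xy.
have sq : forall z : int, z != 0 -> 0 < z ^+ 2.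
  by move=> z zn; rewrite lt_def sqrf_eq0 zn sqr_ge0.
have key : 4 * a * (a * x ^+ 2 + b * x * y + c * y ^+ 2) =
  (2 * a * x + b * y) ^+ 2 - (b ^+ 2 - 4 * a * c) * y ^+ 2 by ring.
have : 0 < 4 * a * (a * x ^+ 2 + b * x * y + c * y ^+ 2).
  rewrite key.
  have [y0|yn0] := eqVneq y 0.
    move: xy; rewrite y0 eqxx orbF => xn0.
    have -> : (2 * a * x + b * 0) ^+ 2 - (b ^+ 2 - 4 * a * c) * 0 ^+ 2 =
      (2 * a) ^+ 2 * x ^+ 2 by ring.
    by rewrite mulr_gt0 // sq // mulf_neq0 // gt_eqF.
  apply: (@lt_le_trans _ _ (- (b ^+ 2 - 4 * a * c) * y ^+ 2)).
    by rewrite mulr_gt0 // ?oppr_gt0 // sq.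
  by rewrite mulNr lerDr sqr_ge0.
by rewrite pmulr_rgt0 // mulr_gt0.
Qed.

Lemma omega_root d Q : 0 < qa Q -> disc Q = d -> Qe Q (omega d Q) 1 = 0.
Proof.
move=> a0 dQ.
have an : ((qa Q)%:~R : algC) != 0 by rewrite intr_eq0 gt_eqF.
have s2 : sqrtC (d%:~R : algC) ^+ 2 = ((qb Q)%:~R) ^+ 2 - 4 * (qa Q)%:~R * (qc Q)%:~R.
  by rewrite sqrtCK -dQ /disc; ring.
rewrite /Qe /omega.
transitivity ((sqrtC (d%:~R : algC) ^+ 2 - (((qb Q)%:~R) ^+ 2 - 4 * (qa Q)%:~R * (qc Q)%:~R))
   / (4 * (qa Q)%:~R)).
  by field.
by rewrite s2 subrr mul0r.
Qed.

Lemma omega_ReIm d Q : d < 0 -> 'Re (omega d Q) = - (qb Q)%:~R / (2 * (qa Q)%:~R) /\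
  'Im (omega d Q) = 'Im (sqrtC (d%:~R : algC)) / (2 * (qa Q)%:~R).
Proof.
move=> dn; case: (sq_props dn) => _ _ re0 _.
have rl : (2 * ((qa Q)%:~R : algC))^-1 \is Num.real.
  by rewrite realV; apply: realM; [exact: (realn _ 2) | exact: realz].
rewrite /omega; split.
  by rewrite (ReMr rl) raddfD raddfN /= Re_int re0 addr0.
by rewrite (ImMr rl) raddfD raddfN /= Im_int oppr0 add0r.
Qed.

Lemma Im_omega d Q : d < 0 -> 0 < qa Q -> 0 < 'Im (omega d Q).
Proof.
move=> dn a0; case: (omega_ReIm Q dn) => _ ->.
case: (sq_props dn) => _ _ _ ims.
by rewrite divr_gt0 // mulr_gt0 // ltr0z.
Qed.

Lemma omega_inj d Q1 Q2 : d < 0 -> 0 < qa Q1 -> 0 < qa Q2 ->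
  disc Q1 = d -> disc Q2 = d -> omega d Q1 = omega d Q2 -> Q1 = Q2.
Proof.
move=> dn a1 a2 d1 d2 e.
case: (omega_ReIm Q1 dn) (omega_ReIm Q2 dn) => r1 i1 [r2 i2].
case: (sq_props dn) => _ _ _ ims.
have ea : qa Q1 = qa Q2.
  have : 'Im (omega d Q1) = 'Im (omega d Q2) by rewrite e.
  have two : (2:algC) != 0 by rewrite pnatr_eq0.
  rewrite i1 i2 => /(mulfI (negbT (gt_eqF ims))) /invr_inj /(mulfI two).
  by move/intr_inj.
have eb : qb Q1 = qb Q2.
  have : 'Re (omega d Q1) = 'Re (omega d Q2) by rewrite e.
  rewrite r1 r2 ea.
  have an : (2 * ((qa Q2)%:~R : algC))^-1 != 0.
    by rewrite invr_eq0 mulf_neq0 ?pnatr_eq0 // intr_eq0 gt_eqF.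
  by move/(mulIf an)/oppr_inj/intr_inj.
have ec : qc Q1 = qc Q2.
  have : 4 * qa Q2 * qc Q1 = 4 * qa Q2 * qc Q2.
    by move: d1 d2; rewrite /disc ea eb; lia.
  by apply: mulfI; rewrite mulf_neq0 // gt_eqF.
by move: Q1 Q2 ea eb ec {a1 a2 d1 d2 e r1 r2 i1 i2} => [[? ?] ?] [[? ?] ?]; rewrite /qa /qb /qc /= => -> -> ->.
Qed.

Lemma act_inv d Q g : d < 0 -> 0 < qa Q -> disc Q = d -> SL2 g ->
  [/\ 0 < qa (form_act Q (invmx g)), disc (form_act Q (invmx g)) = d &
      omega d (form_act Q (invmx g)) = mob g (omega d Q)].
Proof.
move=> dn a0 dQ sg.
case: (SL2_inv sg) => sh hg _.
set h := invmx g in sh hg *.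
case: (mul22E h g); rewrite hg; case: one22 => -> -> -> -> E00 E01 E10 E11.
set Q2 := form_act Q h.
have d2 : disc Q2 = d by rewrite /Q2 disc_act sh expr1n mul1r.
have a2 : 0 < qa Q2.
  rewrite /Q2 /form_act /qa /=; apply: posdef => //; first by move: dn; rewrite -dQ.
  rewrite -negb_and; apply/negP => /andP[/eqP h0 /eqP h1].
  by move: sh; rewrite /SL2 det22 h0 h1 !mul0r mulr0 subrr.
split => //.
set w := omega d Q.
have iw : 0 < 'Im w by apply: Im_omega.
have jn := jfac_neq0 sg iw.
set t := mob g w.
have tJ : t * jfac g w = (m00 g)%:~R * w + (m01 g)%:~R by rewrite /t /mob divfK.
have q0 : Qe Q2 t 1 = 0.
  have : jfac g w ^+ 2 * Qe Q2 t 1 = 0.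
    rewrite -Qe_hom [_ * t]mulrC tJ mulr1 /Q2 Qe_act.
    have -> : (m00 h)%:~R * ((m00 g)%:~R * w + (m01 g)%:~R) + (m01 h)%:~R * jfac g w
      = (m00 h * m00 g + m01 h * m10 g)%:~R * w + (m00 h * m01 g + m01 h * m11 g)%:~R.
      by rewrite /jfac; ring.
    have -> : (m10 h)%:~R * ((m00 g)%:~R * w + (m01 g)%:~R) + (m11 h)%:~R * jfac g w
      = (m10 h * m00 g + m11 h * m10 g)%:~R * w + (m10 h * m01 g + m11 h * m11 g)%:~R.
      by rewrite /jfac; ring.
    rewrite -E00 -E01 -E10 -E11 mul1r mul0r addr0 add0r.
    exact: omega_root.
  by move/eqP; rewrite mulf_eq0 expf_eq0 /= (negbTE jn) /= => /eqP.
case: (sq_props dn) => s2 _ _ ims.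
set s := sqrtC _ in s2 ims *.
have fac : ((2 * qa Q2)%:~R * t + (qb Q2)%:~R - s) * ((2 * qa Q2)%:~R * t + (qb Q2)%:~R + s) = 0.
  transitivity (4 * (qa Q2)%:~R * Qe Q2 t 1 + ((disc Q2)%:~R - s ^+ 2)).
    by rewrite /Qe /disc; ring.
  by rewrite q0 d2 s2 mulr0 subrr addr0.
have an : ((qa Q2)%:~R : algC) != 0 by rewrite intr_eq0 gt_eqF.
move/eqP: fac; rewrite mulf_eq0 => /orP[/eqP e|/eqP e].
  rewrite /omega -/s.
  transitivity (t - ((2 * qa Q2)%:~R * t + (qb Q2)%:~R - s) / (2 * (qa Q2)%:~R)).
    by field; exact: an.
  have -> : (2 * qa Q2)%:~R * t + (qb Q2)%:~R - s = 0 by exact: e.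
  by rewrite mul0r subr0.
have : 'Im ((2 * qa Q2)%:~R * t + (qb Q2)%:~R + s) = 0 by rewrite e raddf0.
rewrite raddfD /= Im_lin => im0.
have : 0 < (2 * qa Q2)%:~R * 'Im t + 'Im s.
  by rewrite addr_gt0 // mulr_gt0 ?ltr0z ?mulr_gt0 // mob_H.
by rewrite im0 ltxx.
Qed.


Lemma Aint_quad (x : algC) (u v : int) :
  x ^+ 2 + u%:~R * x + v%:~R = 0 -> x \in Aint.
Proof.
move=> e.
have [y hy] : exists y : algC, y = - (u%:~R : algC) - x by exists (- (u%:~R : algC) - x).
have hv : (v%:~R : algC) = x * y.
  have h : x ^+ 2 + u%:~R * x + x * y = 0 by rewrite hy; ring.
  by apply: (addrI (x ^+ 2 + u%:~R * x)); rewrite e h.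
have hu : (u%:~R : algC) = - (x + y) by rewrite hy; ring.
pose p := ('X - x%:P) * ('X - y%:P).
have pE : p = 'X^2 + (u%:~R)%:P * 'X + (v%:~R)%:P.
  rewrite /p hu hv polyCN polyCD polyCM; ring.
apply: (@root_monic_Aint p).
- by rewrite /p rootM root_XsubC eqxx.
- by rewrite /p monicMl ?monicXsubC.
rewrite pE; apply/polyOverP => i.
rewrite !coefD coefXn coefCM coefX coefC.
by case: i => [|[|[|i]]] /=; rewrite ?mulr0 ?mulr1 ?add0r ?addr0 ?intr_int.
Qed.

Lemma Kelt_int d (k : int) : Kelt d k%:~R.
Proof. by exists k%:~R, 0; rewrite rmorph0 mul0r addr0 rmorph_int. Qed.

Lemma Kelt_add d x y : Kelt d x -> Kelt d y -> Kelt d (x + y).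
Proof.
move=> [r1 [s1 ->]] [r2 [s2 ->]]; exists (r1 + r2), (s1 + s2).
by rewrite !rmorphD; ring.
Qed.

Lemma Kelt_opp d x : Kelt d x -> Kelt d (- x).
Proof. by move=> [r1 [s1 ->]]; exists (- r1), (- s1); rewrite !rmorphN; ring. Qed.

Lemma Kelt_sub d x y : Kelt d x -> Kelt d y -> Kelt d (x - y).
Proof. by move=> kx ky; apply: Kelt_add => //; apply: Kelt_opp. Qed.

Lemma Kelt_mul d x y : Kelt d x -> Kelt d y -> Kelt d (x * y).
Proof.
move=> [r1 [s1 ->]] [r2 [s2 ->]]; exists (r1 * r2 + s1 * s2 * d%:~R), (r1 * s2 + r2 * s1).
have s2e : sqrtC (d%:~R : algC) ^+ 2 = d%:~R by rewrite sqrtCK.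
rewrite !rmorphD !rmorphM rmorph_int.
set S := sqrtC _ in s2e *.
rewrite -s2e; ring.
Qed.

Lemma Kelt_ratr d (q : rat) : Kelt d (ratr q).
Proof. by exists q, 0; rewrite rmorph0 mul0r addr0. Qed.

Definition Sq (d : int) : algC := sqrtC (d%:~R).

Lemma Kelt_omega d Q : Kelt d (omega d Q).
Proof.
exists (- (qb Q)%:~R / (2 * (qa Q)%:~R)), (1 / (2 * (qa Q)%:~R)).
rewrite /omega !fmorph_div !rmorphN !rmorphM !rmorph_int rmorph_nat rmorph1.
by rewrite mulrDl; congr (_ + _); rewrite mul1r mulrC.
Qed.

Lemma OK_int d (k : int) : OK d k%:~R.
Proof. by split; [exact: Kelt_int | exact: Aint_int]. Qed.

Lemma OK_add d x y : OK d x -> OK d y -> OK d (x + y).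
Proof. by move=> [? ?] [? ?]; split; [exact: Kelt_add | exact: rpredD]. Qed.

Lemma OK_opp d x : OK d x -> OK d (- x).
Proof. by move=> [? ?]; split; [exact: Kelt_opp | rewrite rpredN]. Qed.

Lemma OK_sub d x y : OK d x -> OK d y -> OK d (x - y).
Proof. by move=> [? ?] [? ?]; split; [exact: Kelt_sub | exact: rpredB]. Qed.

Lemma OK_mul d x y : OK d x -> OK d y -> OK d (x * y).
Proof. by move=> [? ?] [? ?]; split; [exact: Kelt_mul | exact: rpredM]. Qed.

Lemma OK_1 d : OK d 1.
Proof. exact: (OK_int d 1). Qed.


Lemma sqf_int (m k : int) (v : rat) : sqfree_int m ->
  m%:~R * v ^+ 2 = k%:~R -> exists z : int, v = z%:~R.
Proof.
move=> sq e.
set n := numq v; set dn := denq v.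
have dn0 : 0 < dn := denq_gt0 v.
have vE : v = n%:~R / dn%:~R by rewrite divq_num_den.
have dnn : (dn%:~R : rat) != 0 by rewrite intr_eq0 gt_eqF.
have ie : m * n ^+ 2 = k * dn ^+ 2.
  apply: (@intr_inj rat).
  have -> : ((m * n ^+ 2)%:~R : rat) = m%:~R * v ^+ 2 * dn%:~R ^+ 2.
    rewrite vE; rewrite intrM rmorphXn; field; exact: dnn.
  by rewrite e intrM rmorphXn.
have dv : (`|dn| ^ 2 %| `|m| * `|n| ^ 2)%N.
  by rewrite -!abszX -abszM ie abszM dvdn_mull.
have cp : coprime (`|dn| ^ 2) (`|n| ^ 2).
  by rewrite coprimeXl // coprimeXr // coprime_sym coprime_num_den.
rewrite Gauss_dvdl // in dv.
have [d1|d1] := leqP `|dn| 1.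
  have dn1 : dn = 1.
    move: d1 dn0; case: (dn) => [k1|k1] //=; lia.
  by exists n; rewrite vE dn1 divr1.
have pp := pdiv_prime d1.
have := sq _ pp; rewrite dvdzE /=.
rewrite (dvdn_trans _ dv) //.
by rewrite dvdn_exp2r // pdiv_dvd.
Qed.

Lemma parA (d u z N b k : int) : (d %% 4)%Z = 1 -> u ^+ 2 - d * z ^+ 2 = 4 * N ->
  b ^+ 2 - 4 * k = d -> exists w, u + b * z = 2 * w.
Proof.
move=> h1 h2 h3.
have [u1 [eu|eu]] : exists u1, u = 2 * u1 \/ u = 2 * u1 + 1 by exists (u %/ 2)%Z; lia.
all: have [z1 [ez|ez]] : exists z1, z = 2 * z1 \/ z = 2 * z1 + 1 by exists (z %/ 2)%Z; lia.
all: have [b1 [eb|eb]] : exists b1, b = 2 * b1 \/ b = 2 * b1 + 1 by exists (b %/ 2)%Z; lia.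
all: have [d1 ed] : exists d1, d = 4 * d1 + 1 by exists (d %/ 4)%Z; lia.
all: subst.
all: try (exfalso; lia).
all: first [by exists (u1 + (2 * b1 + 1) * z1); ring | by exists (u1 + 2 * b1 * z1 + b1 + z1 + 1); ring].
Qed.

Lemma parB (m u w N : int) : ((m %% 4)%Z = 2 \/ (m %% 4)%Z = 3) ->
  u ^+ 2 - m * w ^+ 2 = 4 * N -> exists z, w = 2 * z.
Proof.
move=> h1 h2.
have [u1 [eu|eu]] : exists u1, u = 2 * u1 \/ u = 2 * u1 + 1 by exists (u %/ 2)%Z; lia.
all: have [z1 [ez|ez]] : exists z1, w = 2 * z1 \/ w = 2 * z1 + 1 by exists (w %/ 2)%Z; lia.
all: have [m1 em] : exists m1, m = 4 * m1 + (m %% 4)%Z by exists (m %/ 4)%Z; lia.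
all: try (by exists z1).
all: exfalso; case: h1 => h1; rewrite h1 in em; subst; lia.
Qed.

Lemma parC (u z m N : int) : u ^+ 2 - 4 * m * z ^+ 2 = 4 * N -> exists u1, u = 2 * u1.
Proof.
move=> h.
have [u1 [eu|eu]] : exists u1, u = 2 * u1 \/ u = 2 * u1 + 1 by exists (u %/ 2)%Z; lia.
  by exists u1.
by subst; exfalso; lia.
Qed.


Lemma Crat_int_rat (q : rat) : ratr q \in Aint -> exists u : int, q = u%:~R.
Proof.
move=> a; have := Cint_rat_Aint (Crat_rat q) a.
move/intrP => [u hu]; exists u; apply: (fmorph_inj (@ratr algC)).
by rewrite rmorph_int; exact: hu.
Qed.

Lemma OK_decomp d (b k : int) r : fund_disc d -> d < 0 -> b ^+ 2 - 4 * k = d -> OK d r ->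
  exists m n : int, r = m%:~R + n%:~R * ((- b%:~R + Sq d) / 2).
Proof.
move=> fd dn hb [[x [y rE]] ai].
case: (sq_props dn) => s2 sc _ _.
rewrite -/(Sq d) in s2 sc rE *.
set S := Sq d in s2 sc rE *.
have cr : r^* = ratr x - ratr y * S.
  by rewrite rE rmorphD /= [X in _ + X]rmorphM /= sc !conj_Crat ?Crat_rat // mulrN.
have acr : r^* \in Aint by rewrite Aint_aut.
have [u hu] : exists u : int, 2 * x = u%:~R.
  apply: Crat_int_rat; rewrite [ratr (2 * x)]rmorphM rmorph_nat.
  have -> : 2 * ratr x = r + r^* by rewrite cr rE; ring.
  exact: rpredD.
have [N hN] : exists N : int, x ^+ 2 - d%:~R * y ^+ 2 = N%:~R.
  apply: Crat_int_rat; rewrite rmorphB /= !rmorphXn /= rmorphM /= rmorphXn rmorph_int.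
  have -> : ratr x ^+ 2 - d%:~R * ratr y ^+ 2 = r * r^* by rewrite cr rE -s2; ring.
  exact: rpredM.
have dv : d%:~R * (2 * y) ^+ 2 = (u ^+ 2 - 4 * N)%:~R.
  have -> : ((u ^+ 2 - 4 * N)%:~R : rat) = (u%:~R) ^+ 2 - 4 * N%:~R by ring.
  rewrite -hu -hN; ring.
have [z [w0 [vz hw]]] : exists z w0 : int, 2 * y = z%:~R /\ u + b * z = 2 * w0.
  case: fd => [[_ [d4 sq]] | [m0 [dm [m4 sq]]]].
    have [z vz] := sqf_int sq dv.
    have ie : u ^+ 2 - d * z ^+ 2 = 4 * N.
      apply: (@intr_inj rat).
      have h : (d%:~R : rat) * (z%:~R) ^+ 2 = (u ^+ 2 - 4 * N)%:~R by rewrite -vz.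
      transitivity ((u%:~R : rat) ^+ 2 - d%:~R * z%:~R ^+ 2); first by ring.
      rewrite h; ring.
    have [w0 hw] := parA d4 ie hb.
    by exists z, w0.
  have dv' : m0%:~R * (2 * (2 * y)) ^+ 2 = (u ^+ 2 - 4 * N)%:~R.
    by rewrite -dv dm; ring.
  have [w vw] := sqf_int sq dv'.
  have ie : u ^+ 2 - m0 * w ^+ 2 = 4 * N.
    apply: (@intr_inj rat).
    have h : (m0%:~R : rat) * (w%:~R) ^+ 2 = (u ^+ 2 - 4 * N)%:~R by rewrite -vw.
    transitivity ((u%:~R : rat) ^+ 2 - m0%:~R * w%:~R ^+ 2); first by ring.
    rewrite h; ring.
  have [z wz] := parB m4 ie.
  have ie2 : u ^+ 2 - 4 * m0 * z ^+ 2 = 4 * N by rewrite -ie wz; ring.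
  have [u1 eu] := parC ie2.
  have [b1 eb] : exists b1, b = 2 * b1.
    move: hb; rewrite dm => hb.
    have [b1 [eb|eb]] : exists b1, b = 2 * b1 \/ b = 2 * b1 + 1 by exists (b %/ 2)%Z; lia.
      by exists b1.
    by subst; exfalso; lia.
  exists z, (u1 + b1 * z); split; last by rewrite eu eb; ring.
  apply: (@mulfI _ 2); first by rewrite pnatr_eq0.
  by rewrite vw wz rmorphM.
exists w0, z.
have xE : ratr x = (u%:~R : algC) / 2.
  have : ratr (2 * x) = (u%:~R : algC) by rewrite hu rmorph_int.
  rewrite rmorphM rmorph_nat => <-; by field.
have yE : ratr y = (z%:~R : algC) / 2.
  have : ratr (2 * y) = (z%:~R : algC) by rewrite vz rmorph_int.
  rewrite rmorphM rmorph_nat => <-; by field.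
have wE : (w0%:~R : algC) = (u%:~R + b%:~R * z%:~R) / 2.
  have : ((u + b * z)%:~R : algC) = (2 * w0)%:~R by rewrite hw.
  rewrite rmorphD rmorphM rmorphM /= => ->; by field.
rewrite rE xE yE wE; by field.
Qed.


Definition scal (k : algC) (S : cset) : cset := fun x => exists y, S y /\ x = k * y.

Definition module d (S : cset) : Prop :=
  [/\ S 0, (forall x y, S x -> S y -> S (x - y)) & (forall r x, OK d r -> S x -> S (r * x))].

Lemma module_add d S x y : module d S -> S x -> S y -> S (x + y).
Proof.
move=> [h0 hs _] sx sy.
have := hs _ _ sx (hs _ _ h0 sy); by rewrite sub0r opprK.
Qed.

Lemma eqI_sym I J : eqI I J -> eqI J I.
Proof. by move=> h x; split => /h. Qed.

Lemma eqI_trans I J K : eqI I J -> eqI J K -> eqI I K.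
Proof. by move=> h1 h2 x; split => [/h1/h2|/h2/h1]. Qed.

Lemma eqI_refl I : eqI I I.
Proof. by []. Qed.

Lemma prodI_eqI_r I J J' : eqI J J' -> eqI (prodI I J) (prodI I J').
Proof.
move=> h x; split => -[s [hs ->]]; exists s; split => // p /hs [? /h ?]; by split.
Qed.

Lemma prodI_principal d S k : module d S -> eqI (prodI S (principal d k)) (scal k S).
Proof.
move=> mS x; split.
  move=> [s [hs ->]]; elim: s hs => [|p s IH] hs.
    by exists 0; rewrite big_nil mulr0; split => //; case: mS.
  have [y [sy ey]] : scal k S (\sum_(q <- s) q.1 * q.2).
    by apply: IH => q qs; apply: hs; rewrite inE qs orbT.
  have [p1 [r [okr p2]]] : S p.1 /\ principal d k p.2 by apply: hs; rewrite inE eqxx.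
  exists (r * p.1 + y); split.
    apply: (@module_add d) => //; case: mS => _ _ hm; exact: hm.
  by rewrite big_cons ey p2; ring.
move=> [y [sy ->]]; exists [:: (y, k)]; split.
  move=> p; rewrite inE => /eqP -> /=; split => //; exists 1; split; [exact: OK_1 | by rewrite mulr1].
by rewrite big_cons big_nil addr0 mulrC.
Qed.

Lemma frac_ideal_eqI d I J : eqI I J -> frac_ideal d I -> frac_ideal d J.
Proof.
move=> h [k [z [s [m [[x [Ix xn]] [c [cn okc cI]]]]]]].
split; first by move=> y /h; apply: k.
split; first by apply/h.
split; first by move=> y1 y2 /h a /h b; apply/h; apply: s.
split; first by move=> r y okr /h Iy; apply/h; apply: m.
split; first by exists x; split => //; apply/h.
by exists c; split => // y /h; apply: cI.
Qed.

Lemma coprime_integral_eqI d N I J : eqI I J -> coprime_integral d N I -> coprime_integral d N J.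
Proof.
move=> h [f sub sm]; split.
- exact: frac_ideal_eqI f.
- by move=> x /h; apply: sub.
move=> x; split.
  by move=> [y [z [/h Iy nz ->]]]; apply/sm; exists y, z.
by move/sm => [y [z [/h Iy nz ->]]]; exists y, z.
Qed.

Lemma OK_module d : module d (OK d).
Proof.
split; first exact: (OK_int d 0).
  by move=> x y; apply: OK_sub.
by move=> r x; apply: OK_mul.
Qed.

Lemma scal_module d k S : module d S -> module d (scal k S).
Proof.
move=> [h0 hs hm]; split.
- by exists 0; rewrite mulr0.
- by move=> _ _ [y1 [s1 ->]] [y2 [s2 ->]]; exists (y1 - y2); split; [apply: hs | ring].
by move=> r _ okr [y [sy ->]]; exists (r * y); split; [apply: hm | ring].
Qed.

Lemma frac_of_module d S : module d S -> (forall x, S x -> Kelt d x) ->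
  (exists x, S x /\ x != 0) ->
  (exists c, [/\ c != 0, OK d c & forall x, S x -> OK d (c * x)]) -> frac_ideal d S.
Proof.
move=> [h0 hs hm] k nz cc; split => //; split => //; split => //; split => //.
Qed.

Lemma frac_scal d (k : algC) S : frac_ideal d S -> module d S -> k != 0 -> OK d k ->
  frac_ideal d (scal k S).
Proof.
move=> [kS [_ [_ [_ [[x [Sx xn]] [c [cn okc cI]]]]]]] mS kn okk.
apply: frac_of_module; first exact: scal_module.
- by move=> _ [y [Sy ->]]; apply: Kelt_mul; [case: okk | exact: kS].
- by exists (k * x); split; [exists x | rewrite mulf_neq0].
exists c; split => // _ [y [Sy ->]].
by rewrite mulrCA; apply: OK_mul => //; apply: cI.
Qed.

Lemma coprime_scal d N S (a : int) : module d S -> frac_ideal d S ->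
  (forall r, OK d r -> S r) -> (forall y, S y -> OK d (a%:~R * y)) ->
  coprimez a N%:Z -> a != 0 -> coprime_integral d N (scal a%:~R S).
Proof.
move=> mS fS okS aS cp an; split.
- by apply: frac_scal => //; [rewrite intr_eq0 | exact: OK_int].
- by move=> _ [y [Sy ->]]; apply: aS.
move=> x; split.
  move=> [_ [_ [[y [Sy ->]] [r [okr ->]] ->]]].
  apply: OK_add; first exact: aS.
  by apply: OK_mul => //; exact: (OK_int d N).
move=> okx.
have [u [v e]] : exists u v : int, u * a + v * N%:Z = 1.
  have := Bezoutz a N%:Z; case=> u [v e]; exists u, v.
  by move: cp; rewrite /coprimez => /eqP c1; rewrite e c1.
exists (a%:~R * (u%:~R * x)), (N%:R * (v%:~R * x)); split.
- by exists (u%:~R * x); split => //; apply: okS; apply: OK_mul => //; exact: OK_int.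
- by exists (v%:~R * x); split => //; apply: OK_mul => //; exact: OK_int.
transitivity (((u * a + v * N%:Z)%:~R : algC) * x); first by rewrite e mul1r.
by rewrite intrD !intrM; ring.
Qed.


Lemma aomega d Q : 0 < qa Q ->
  (qa Q)%:~R * omega d Q = (- (qb Q)%:~R + Sq d) / 2.
Proof.
move=> a0; have an : ((qa Q)%:~R : algC) != 0 by rewrite intr_eq0 gt_eqF.
rewrite /omega /Sq; field; exact: an.
Qed.

Lemma lat_module d Q : fund_disc d -> d < 0 -> 0 < qa Q -> disc Q = d ->
  module d (lat (omega d Q)).
Proof.
move=> fd dn a0 dQ; split.
- by exists 0, 0; rewrite !mul0r addr0.
- move=> _ _ [m1 [n1 ->]] [m2 [n2 ->]]; exists (m1 - m2), (n1 - n2).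
  by rewrite !intrB; ring.
move=> r _ okr [k1 [l ->]].
have hb : qb Q ^+ 2 - 4 * (qa Q * qc Q) = d by rewrite -dQ /disc mulrA.
have [m [n ->]] := OK_decomp fd dn hb okr.
have q0 := omega_root a0 dQ.
rewrite -aomega //.
exists (m * k1 - n * k1 * qb Q + n * l * qa Q), (m * l - n * k1 * qc Q).
transitivity ((m * k1 - n * k1 * qb Q + n * l * qa Q)%:~R * omega d Q +
  (m * l - n * k1 * qc Q)%:~R + (n * k1)%:~R * Qe Q (omega d Q) 1).
  by rewrite /Qe; ring.
by rewrite q0 mulr0 addr0.
Qed.

Lemma OK_in_module d S r : module d S -> S 1 -> OK d r -> S r.
Proof. by move=> [_ _ hm] s1 okr; rewrite -[r]mulr1; apply: hm. Qed.

Lemma lat1 w : lat w 1.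
Proof. by exists 0, 1; rewrite mul0r add0r. Qed.

Lemma lat_w w : lat w w.
Proof. by exists 1, 0; rewrite mul1r addr0. Qed.

Lemma Kelt_lat d w x : Kelt d w -> lat w x -> Kelt d x.
Proof.
move=> kw [m [n ->]]; apply: Kelt_add; last exact: Kelt_int.
by apply: Kelt_mul => //; exact: Kelt_int.
Qed.

Lemma W_OK d Q : 0 < qa Q -> disc Q = d -> OK d ((qa Q)%:~R * omega d Q).
Proof.
move=> a0 dQ; split.
  by apply: Kelt_mul; [exact: Kelt_int | exact: Kelt_omega].
apply: (@Aint_quad _ (qb Q) (qa Q * qc Q)).
have q0 := omega_root a0 dQ.
transitivity ((qa Q)%:~R * Qe Q (omega d Q) 1); first by rewrite /Qe; ring.
by rewrite q0 mulr0.
Qed.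

Lemma frac_OK d : frac_ideal d (OK d).
Proof.
apply: frac_of_module; first exact: OK_module.
- by move=> x [].
- by exists 1; split; [exact: OK_1 | exact: oner_neq0].
by exists 1; split; [exact: oner_neq0 | exact: OK_1 | move=> x; rewrite mul1r].
Qed.

Lemma frac_lat d Q : fund_disc d -> d < 0 -> 0 < qa Q -> disc Q = d ->
  frac_ideal d (lat (omega d Q)).
Proof.
move=> fd dn a0 dQ.
apply: frac_of_module; first exact: lat_module.
- by move=> x; apply: Kelt_lat; exact: Kelt_omega.
- by exists 1; split; [exact: lat1 | exact: oner_neq0].
exists (qa Q)%:~R; split; [by rewrite intr_eq0 gt_eqF | exact: OK_int |].
move=> _ [m [n ->]].
rewrite mulrDr mulrCA; apply: OK_add.
  by apply: OK_mul; [exact: OK_int | exact: W_OK].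
by rewrite -intrM; exact: OK_int.
Qed.

Lemma I_K_lat d N Q : fund_disc d -> d < 0 -> QN d N Q -> I_K d N (lat (omega d Q)).
Proof.
move=> fd dn [[a0 _ dQ] cp].
have dQ' : disc Q = d by [].
have an : qa Q != 0 by rewrite gt_eqF.
have mL := lat_module fd dn a0 dQ'.
split; first exact: frac_lat.
exists (prodI (lat (omega d Q)) (principal d (qa Q)%:~R)), (principal d (qa Q)%:~R).
split => //.
- apply: coprime_integral_eqI; first exact: eqI_sym (prodI_principal _ mL).
  apply: coprime_scal => //; first exact: frac_lat.
    by move=> r; apply: OK_in_module => //; exact: lat1.
  move=> _ [m [n ->]].
  rewrite mulrDr mulrCA; apply: OK_add.
    by apply: OK_mul; [exact: OK_int | exact: W_OK].
  by rewrite -intrM; exact: OK_int.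
apply: (@coprime_scal d N (OK d) (qa Q)) => //.
- exact: OK_module.
- exact: frac_OK.
by move=> y oky; apply: OK_mul => //; exact: OK_int.
Qed.

Lemma lat_mob g w : SL2 g -> jfac g w != 0 ->
  eqI (lat w) (scal (jfac g w) (lat (mob g w))).
Proof.
move=> sg jn.
have tJ : jfac g w * mob g w = (m00 g)%:~R * w + (m01 g)%:~R by rewrite /mob mulrC divfK.
move: sg; rewrite /SL2 det22 => sg.
move=> x; split.
  move=> [m [n ->]].
  exists ((m * m11 g - n * m10 g)%:~R * mob g w + (- m * m01 g + n * m00 g)%:~R); split.
    by exists (m * m11 g - n * m10 g), (- m * m01 g + n * m00 g).
  rewrite mulrDr mulrCA tJ /jfac.
  transitivity (((m00 g * m11 g - m01 g * m10 g) * m)%:~R * w + ((m00 g * m11 g - m01 g * m10 g) * n)%:~R).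
    by rewrite sg !mul1r.
  ring.
move=> [_ [[m [n ->]] ->]].
exists (m * m00 g + n * m10 g), (m * m01 g + n * m11 g).
rewrite mulrDr mulrCA tJ /jfac; ring.
Qed.

Lemma mult_OK d w x : Kelt d w -> (forall y, lat w y -> lat w (x * y)) -> OK d x.
Proof.
move=> kw h.
have [r [s xs]] : lat w x by rewrite -[x]mulr1; apply: h; exact: lat1.
have [p [q xw]] := h _ (lat_w w).
split; first by apply: (Kelt_lat kw); exists r, s.
apply: (@Aint_quad _ (- (p + s)) (p * s - q * r)).
have e1 : (x - p%:~R) * w = q%:~R by rewrite mulrBl xw; ring.
have e2 : x - s%:~R = r%:~R * w by rewrite xs; ring.
transitivity ((x - p%:~R) * (x - s%:~R) - q%:~R * r%:~R); first by ring.
by rewrite e2 mulrCA e1; ring.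
Qed.


Lemma int_unit (x y : int) : x * y = 1 -> x = 1 \/ x = -1.
Proof.
move=> h; have := congr1 absz h; rewrite abszM /= => /eqP; rewrite muln_eq1 => /andP [/eqP hx _].
lia.
Qed.

Lemma lin_indep (w : algC) (A B : int) : 0 < 'Im w -> A%:~R * w + B%:~R = 0 -> A = 0 /\ B = 0.
Proof.
move=> iw e.
have : 'Im (A%:~R * w + B%:~R) = 0 by rewrite e raddf0.
rewrite Im_lin => /eqP; rewrite mulf_eq0 (negbTE (lt0r_neq0 iw)) orbF intr_eq0 => /eqP A0.
split => //; by move: e; rewrite A0 mul0r add0r => /eqP; rewrite intr_eq0 => /eqP.
Qed.

Definition mk22 (p q r s : int) : 'M[int]_2 :=
  \matrix_(i, j) if i == ord0 then (if j == ord0 then p else q) else (if j == ord0 then r else s).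

Lemma mk22E p q r s :
  [/\ m00 (mk22 p q r s) = p, m01 (mk22 p q r s) = q, m10 (mk22 p q r s) = r &
      m11 (mk22 p q r s) = s].
Proof. by rewrite /m00 /m01 /m10 /m11 !mxE. Qed.

Lemma principal_unit d nu j : nu != 0 -> j != 0 -> OK d (nu / j) -> OK d (j / nu) ->
  eqI (principal d nu) (principal d j).
Proof.
move=> nn jn o1 o2 x; split.
  move=> [r [okr ->]]; exists (nu / j * r); split; first exact: OK_mul.
  by rewrite mulrA mulrCA divff // mulr1.
move=> [r [okr ->]]; exists (j / nu * r); split; first exact: OK_mul.
by rewrite mulrA mulrCA divff // mulr1.
Qed.

Lemma scal_unit (L : cset) nu j : j != 0 -> (forall x, scal nu L x -> scal j L x) ->
  forall y, L y -> L (nu / j * y).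
Proof.
move=> jn h y Ly.
have [y' [Ly' e]] : scal j L (nu * y) by apply: h; exists y.
by rewrite mulrAC e mulrC mulKf.
Qed.

Theorem proposition2p4 (d : int) (N : nat) (P : cset -> Prop) (G : 'M[int]_2 -> Prop) :
  fund_disc d -> d < 0 -> (0 < N)%N ->
  ideal_subgroup d N P ->
  (forall I, P_K1 d N I -> P I) ->
  (forall I, P I -> P_K d N I) ->
  SL2_subgroup G ->
  (phi_wd_inj d N P G <-> propertyP d N P G).
Proof.
move=> fd dn N0 [Peq PIK Pok Pmul Pinv] P1 PPK [Gsl G1 Gmul Ginv].
split.
- move=> [hIK wd inj] Q g qn sg qn2.
  set w := omega d Q.
  have [[a0 _ dQ] _] := qn.
  have iw : 0 < 'Im w := Im_omega dn a0.
  have jn := jfac_neq0 sg iw.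
  have [a2 d2 om2] := act_inv dn a0 dQ sg.
  set Q2 := form_act Q (invmx g) in a2 d2 om2 qn2 *.
  have mL2 : module d (lat (omega d Q2)) := lat_module fd dn a2 d2.
  have L2 : eqI (lat w) (scal (jfac g w) (lat (omega d Q2))) by rewrite om2; exact: lat_mob.
  split.
  + move=> Pj.
    have sc : same_class P (lat w) (lat (omega d Q2)).
      exists (principal d (jfac g w)); split => //.
      apply: eqI_trans L2 _; apply: eqI_sym; exact: prodI_principal.
    have [g0 [Gg0 e0]] := inj Q Q2 qn qn2 sc.
    have sg0 := Gsl _ Gg0.
    case: (SL2_inv sg0) => si0 V0 W0.
    have [_ _ om0] := act_inv dn a0 dQ si0.
    rewrite invmxK -e0 in om0.
    exists (invmx g0), (g0 *m g); split.
    * exact: Ginv.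
    * exact: SL2_mul.
    * rewrite mob_mul // -om2 om0 -mob_mul; last exact: jfac_neq0 si0 iw.
      by rewrite W0 mob1.
    * by rewrite mulmxA V0 mul1mx.
  + move=> [g1 [h [Gg1 sh hw eg]]].
    have sg1 := Gsl _ Gg1.
    have jh := jfac_neq0 sh iw.
    have [a3 d3 om3] := act_inv dn a0 dQ sg1.
    have e3 : form_act Q (invmx g1) = Q2.
      apply: (omega_inj dn a3 a2 d3 d2).
      by rewrite om3 om2 eg mob_mul // hw.
    have sim : simG G Q Q2 by exists (invmx g1); split; [exact: Ginv | by rewrite e3].
    have [C [PC eC]] := wd Q Q2 qn qn2 sim.
    have [_ [nu [nun knu eCnu]]] := PPK _ PC.
    have L3 : eqI (lat w) (scal nu (lat (omega d Q2))).
      apply: eqI_trans eC _; apply: eqI_trans (prodI_eqI_r _ eCnu) _.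
      exact: prodI_principal.
    have kw2 : Kelt d (omega d Q2) := Kelt_omega d Q2.
    have ox : OK d (nu / jfac g w).
      apply: (mult_OK kw2); apply: scal_unit => // x /L3 /L2; exact.
    have ox' : OK d (jfac g w / nu).
      apply: (mult_OK kw2); apply: scal_unit => // x /L2 /L3; exact.
    apply: (Peq C) => //.
    apply: eqI_trans eCnu _; exact: principal_unit.
- move=> PP; split.
  + by move=> Q qn; exact: I_K_lat.
  + move=> Q Q' qn qn' [gam [Ggam e]].
    have sgam := Gsl _ Ggam.
    case: (SL2_inv sgam) => sg _ _.
    set g := invmx gam in sg *.
    have e' : form_act Q (invmx g) = Q' by rewrite /g invmxK e.
    have qn2 : QN d N (form_act Q (invmx g)) by rewrite e'.
    set w := omega d Q.
    have [[a0 _ dQ] _] := qn.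
    have iw : 0 < 'Im w := Im_omega dn a0.
    have jn := jfac_neq0 sg iw.
    have Pj : P (principal d (jfac g w)).
      apply/(PP Q g qn sg qn2).
      exists g, 1%:M; split; [exact: Ginv | exact: SL2_1 | exact: mob1 | by rewrite mulmx1].
    have [a2 d2 om2] := act_inv dn a0 dQ sg.
    rewrite e' in a2 d2 om2.
    exists (principal d (jfac g w)); split => //.
    apply: eqI_trans (lat_mob sg jn) _; rewrite -om2.
    apply: eqI_sym; apply: prodI_principal; exact: lat_module.
  + move=> Q Q' qn qn' [C [PC eC]].
    have [_ [nu [nun knu eCnu]]] := PPK _ PC.
    set w := omega d Q; set w' := omega d Q'.
    have [[a0 _ dQ] _] := qn.
    have [[a0' _ dQ'] _] := qn'.
    have iw : 0 < 'Im w := Im_omega dn a0.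
    have iw' : 0 < 'Im w' := Im_omega dn a0'.
    have mL' : module d (lat w') := lat_module fd dn a0' dQ'.
    have L3 : eqI (lat w) (scal nu (lat w')).
      apply: eqI_trans eC _; apply: eqI_trans (prodI_eqI_r _ eCnu) _.
      exact: prodI_principal.
    have [y1 [[al [be ->]] ew]] := (L3 w).1 (lat_w w).
    have [y2 [[ga [de ->]] e1]] := (L3 1).1 (lat1 w).
    have [al' [be' ew']] : lat w (nu * w') by apply/L3; exists w'; split => //; exact: lat_w.
    have [ga' [de' en]] : lat w nu by apply/L3; exists 1; split; [exact: lat1 | rewrite mulr1].
    set M := mk22 al' be' ga' de'.
    case: (mk22E al' be' ga' de') => M00 M01 M10 M11.
    have jM : jfac M w = nu by rewrite /jfac M10 M11 en.
    have mM : mob M w = w'.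
      by rewrite /mob -/(jfac M w) jM M00 M01 -ew' mulrC mulKf.
    have c1 : (al * al' + be * ga' - 1)%:~R * w + (al * be' + be * de')%:~R = 0.
      transitivity (al%:~R * (nu * w') + be%:~R * nu - w); last first.
        by rewrite [X in _ - X]ew; ring.
      by rewrite ew' en; ring.
    have c2 : (ga * al' + de * ga')%:~R * w + (ga * be' + de * de' - 1)%:~R = 0.
      transitivity (ga%:~R * (nu * w') + de%:~R * nu - 1); last first.
        by rewrite [X in _ - X]e1; ring.
      by rewrite ew' en; ring.
    have [h1 h2] := lin_indep iw c1.
    have [h3 h4] := lin_indep iw c2.
    have dM : \det M * (al * de - be * ga) = 1.
      rewrite det22 M00 M01 M10 M11.
      transitivity ((al * al' + be * ga') * (ga * be' + de * de') - (al * be' + be * de') * (ga * al' + de * ga')).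
        ring.
      have h1' : al * al' + be * ga' = 1 by lia.
      have h4' : ga * be' + de * de' = 1 by lia.
      by rewrite h1' h2 h3 h4'; ring.
    have sM : SL2 M.
      case: (int_unit dM) => // dm1.
      have : 0 < 'Im (mob M w) by rewrite mM.
      rewrite Im_mob dm1 => h.
      have hpos : 0 < 'Im w / `|jfac M w| ^+ 2.
        by rewrite divr_gt0 // exprn_gt0 // normr_gt0 jM.
      have eq : ((-1)%:~R * 'Im w / `|jfac M w| ^+ 2 : algC) = - ('Im w / `|jfac M w| ^+ 2).
        by ring.
      move: h; rewrite eq oppr_gt0 => h'.
      by move: (lt_trans h' hpos); rewrite ltxx.
    have [aM dM2 omM] := act_inv dn a0 dQ sM.
    have eM : form_act Q (invmx M) = Q'.
      by apply: (omega_inj dn aM a0' dM2 dQ'); rewrite omM mM.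
    have PM : P (principal d (jfac M w)) by rewrite jM; apply: (Peq C).
    have [g1 [h [Gg1 sh hw eg]]] := (PP Q M qn sM (eq_ind_r _ qn' eM)).1 PM.
    have sg1 := Gsl _ Gg1.
    have [a3 d3 om3] := act_inv dn a0 dQ sg1.
    exists (invmx g1); split; first exact: Ginv.
    apply: (omega_inj dn a0' a3 dQ' d3).
    rewrite om3; transitivity (mob M w); first by rewrite mM.
    by rewrite eg mob_mul ?hw //; apply: jfac_neq0 iw.
Qed.
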